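(* Let $\sigma\colon\mathbb{H}^3\to\mathbb{H}^3$ be the cyclic shift $\sigma(a,b,c)=(b,c,a)$, and let $m\ge1$. Suppose $x_1,\dots,x_{3m}\in\mathbb{H}^3$ and $w_1,\dots,w_{3m}\in\mathbb{R}$ satisfy: (1) $x_{m+i}=\sigma(x_i)$ for $i=1,\dots,2m$; (2) $w_{m+i}=w_i$ for $i=1,\dots,2m$; (3) $|x_i|^2=1$ for $i=1,\dots,m$; (4) the squared inner products $|\langle x_i,x_j\rangle|^2$, taken over all $i\in\{1,\dots,m\}$ together with all $j$ in any of the following ranges, are all equal: (i) $j=i+m$; (ii) $i<j\le m$; (iii) $i+m<j\le 2m$; (iv) $i+2m<j\le 3m$; (5) the matrix $\sum_{i=1}^{3m}w_ix_ix_i^\dagger$ has $(1,1)$ entry equal to $1$ and $(1,2)$ entry equal to $0$. Then $w_1=\cdots=w_{3m}=1/m$ and $\{x_1,\dots,x_{3m}\}$ is a tight simplex in $\mathbb{H}\mathbb{P}^2$.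
   Context: $\mathbb{H}$ denotes the quaternions; $\dagger$ is conjugate transpose and $\langle x,y\rangle=x^\dagger y$ on $\mathbb{H}^3$. $\mathbb{H}\mathbb{P}^{2}$ is the space of quaternionic lines in $\mathbb{H}^3$ (scalars acting on the right), points represented by unit vectors. A tight simplex of $N$ points in $\mathbb{H}\mathbb{P}^{2}$ is a set of $N$ distinct points $x_1,\dots,x_N$ with $|\langle x_i,x_j\rangle|^2=\frac{N-3}{3(N-1)}$ for all $i\ne j$. *)

(* Defs.v *)
From HB Require Import structures.
From mathcomp Require Import all_boot all_order all_algebra.
Set Implicit Arguments. Unset Strict Implicit. Unset Printing Implicit Defensive.
Import Order.TTheory GRing.Theory Num.Theory.
Local Open Scope ring_scope.

Section Quat.
Variable R : realFieldType.

Record quat := Quat { qre : R; qi : R; qj : R; qk : R }.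

Definition qzero : quat := Quat 0 0 0 0.
Definition qadd (p q : quat) : quat :=
  Quat (qre p + qre q) (qi p + qi q) (qj p + qj q) (qk p + qk q).
Definition qmul (p q : quat) : quat :=
  Quat (qre p * qre q - qi p * qi q - qj p * qj q - qk p * qk q)
       (qre p * qi q + qi p * qre q + qj p * qk q - qk p * qj q)
       (qre p * qj q - qi p * qk q + qj p * qre q + qk p * qi q)
       (qre p * qk q + qi p * qj q - qj p * qi q + qk p * qre q).
Definition qconj (q : quat) : quat := Quat (qre q) (- qi q) (- qj q) (- qk q).
Definition qscale (a : R) (q : quat) : quat :=
  Quat (a * qre q) (a * qi q) (a * qj q) (a * qk q).
Definition qreal (a : R) : quat := Quat a 0 0 0.
Definition qnorm2 (q : quat) : R :=
  qre q ^+ 2 + qi q ^+ 2 + qj q ^+ 2 + qk q ^+ 2.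
Definition qsum (lo hi : nat) (F : nat -> quat) : quat :=
  Quat (\sum_(lo <= i < hi) qre (F i)) (\sum_(lo <= i < hi) qi (F i))
       (\sum_(lo <= i < hi) qj (F i)) (\sum_(lo <= i < hi) qk (F i)).

Definition hvec := 'I_3 -> quat.

Definition hinner (x y : hvec) : quat :=
  qadd (qmul (qconj (x 0%R)) (y 0%R))
       (qadd (qmul (qconj (x 1%R)) (y 1%R)) (qmul (qconj (x 2%R)) (y 2%R))).
Definition hshift (x : hvec) : hvec := fun k => x (k + 1)%R.

(* (a,b) entry of the matrix x x^dagger : x_a * conj(x_b) *)
Definition outer_entry (x : hvec) (a b : 'I_3) : quat := qmul (x a) (qconj (x b)).

(* x and y span the same quaternionic line (right scalars): y = x * lambda
   for some nonzero lambda *)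
Definition same_hline (x y : hvec) : Prop :=
  exists lam : quat, lam <> qzero /\ forall k, y k = qmul (x k) lam.

(* tight simplex of N points in HP^2, points represented by the unit
   vectors x_1..x_N (indices 1..N) *)
Definition tight_simplex (N : nat) (x : nat -> hvec) : Prop :=
  (forall i, (1 <= i <= N)%N -> \sum_(k < 3) qnorm2 (x i k) = 1) /\
  (forall i j, (1 <= i <= N)%N -> (1 <= j <= N)%N -> i <> j ->
     ~ same_hline (x i) (x j)) /\
  (forall i j, (1 <= i <= N)%N -> (1 <= j <= N)%N -> i <> j ->
     qnorm2 (hinner (x i) (x j)) = (N%:R - 3) / (3 * (N%:R - 1))).

End Quat.

(* Main.v *)
Require Import Defs.
From HB Require Import structures.
From mathcomp Require Import all_boot all_order all_algebra.
From mathcomp Require Import reals.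
From mathcomp Require Import ring lra zify.
Import Order.TTheory GRing.Theory Num.Theory.
Set Implicit Arguments. Unset Strict Implicit.
Local Open Scope ring_scope.

Lemma s0 (R : realFieldType) (x : hvec R) : hshift x 0 = x 1.
Proof. rewrite /hshift; congr (x _); exact/val_inj. Qed.
Lemma s1 (R : realFieldType) (x : hvec R) : hshift x 1 = x 2.
Proof. rewrite /hshift; congr (x _); exact/val_inj. Qed.
Lemma s2 (R : realFieldType) (x : hvec R) : hshift x 2 = x 0.
Proof. rewrite /hshift; congr (x _); exact/val_inj. Qed.

Definition NN (R : realFieldType) (x : hvec R) := qnorm2 (x 0) + qnorm2 (x 1) + qnorm2 (x 2).
Definition qdot (R : realFieldType) (p q : quat R) :=
  qre p * qre q + qi p * qi q + qj p * qj q + qk p * qk q.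
Definition T01 (R : realFieldType) (x : hvec R) :=
  qadd (outer_entry x 0 1) (qadd (outer_entry x 1 2) (outer_entry x 2 0)).
Definition QQ (R : realFieldType) (x y : hvec R) := qnorm2 (hinner x y).

Lemma NN_sum (R : realFieldType) (x : hvec R) : \sum_(k < 3) qnorm2 (x k) = NN x.
Proof.
rewrite /NN !big_ord_recl big_ord0 addr0 addrA.
by congr (qnorm2 (x _) + qnorm2 (x _) + qnorm2 (x _)); apply/val_inj.
Qed.

Ltac qexp x y :=
  move: (x 0) (x 1) (x 2) (y 0) (y 1) (y 2) => [a0 a1 a2 a3] [b0 b1 b2 b3] [c0 c1 c2 c3]
  [d0 d1 d2 d3] [e0 e1 e2 e3] [f0 f1 f2 f3];
  rewrite /qnorm2 /qadd /qmul /qconj /=.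

Lemma key_id (R : realFieldType) (x y : hvec R) :
  QQ x y + QQ (hshift x) y + QQ (hshift (hshift x)) y = NN x * NN y + 2 * qdot (T01 x) (T01 y).
Proof.
rewrite /QQ /NN /T01 /qdot /hinner /outer_entry !s0 !s1 !s2 ?s0 ?s1 ?s2.
qexp x y; ring.
Qed.

Lemma QQ_shift (R : realFieldType) (x y : hvec R) : QQ (hshift x) (hshift y) = QQ x y.
Proof. rewrite /QQ /hinner !s0 !s1 !s2. qexp x y; ring. Qed.

Lemma QQ_sym (R : realFieldType) (x y : hvec R) : QQ x y = QQ y x.
Proof. rewrite /QQ /hinner. qexp x y; ring. Qed.

Lemma QQ_s12 (R : realFieldType) (x y : hvec R) : QQ (hshift x) y = QQ x (hshift (hshift y)).
Proof. rewrite /QQ /hinner !s0 !s1 !s2 ?s0 ?s1 ?s2. qexp x y; ring. Qed.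

Lemma QQ_self (R : realFieldType) (x : hvec R) : QQ x x = NN x ^+ 2.
Proof. rewrite /QQ /NN /hinner. qexp x x; ring. Qed.

Lemma NN_shift (R : realFieldType) (x : hvec R) : NN (hshift x) = NN x.
Proof. rewrite /NN !s0 !s1 !s2. qexp x x; ring. Qed.

Lemma line_id (R : realFieldType) (x y : hvec R) (lam : quat R) :
  (forall k, y k = qmul (x k) lam) ->
  QQ x y = NN x ^+ 2 * qnorm2 lam /\ NN y = NN x * qnorm2 lam.
Proof.
move=> H; rewrite /QQ /NN /hinner !H; clear H.
move: lam => [l0 l1 l2 l3].
qexp x x; split; ring.
Qed.

Lemma outer00 (R : realFieldType) (x : hvec R) :
  qre (outer_entry x 0 0) + qre (outer_entry (hshift x) 0 0)
  + qre (outer_entry (hshift (hshift x)) 0 0) = NN x.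
Proof. rewrite /NN /outer_entry !s0 !s1 ?s0. qexp x x; ring. Qed.

Lemma T01_split (R : realFieldType) (pi : quat R -> R)
  (Hp : forall p q, pi (qadd p q) = pi p + pi q) (x : hvec R) :
  pi (outer_entry x 0 1) + pi (outer_entry (hshift x) 0 1)
  + pi (outer_entry (hshift (hshift x)) 0 1) = pi (T01 x).
Proof. by rewrite /T01 !Hp /outer_entry !s0 !s1 ?s0 ?s1 ?s2 addrA. Qed.

Lemma sum_shift (R : realFieldType) (a b k : nat) (F : nat -> R) :
  \sum_(a + k <= i < b + k) F i = \sum_(a <= i < b) F (i + k)%N.
Proof. by rewrite big_addn addnK. Qed.

Lemma orbit_sum (R : realType) (m : nat) (x : nat -> hvec R) (w : nat -> R)
  (h : hvec R -> R) :
  (forall i, (1 <= i <= 2 * m)%N -> x (m + i)%N = hshift (x i)) ->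
  (forall i, (1 <= i <= 2 * m)%N -> w (m + i)%N = w i) ->
  \sum_(1 <= i < (3 * m).+1) w i * h (x i) =
  \sum_(1 <= i < m.+1) w i * (h (x i) + h (hshift (x i)) + h (hshift (hshift (x i)))).
Proof.
move=> hx hw.
rewrite (big_cat_nat _ (n:=m.+1)) //=; last lia.
rewrite [X in _ + X](big_cat_nat _ (n:=(2 * m).+1)) //=; [|lia|lia].
have E2 : \sum_(m.+1 <= i < (2 * m).+1) w i * h (x i)
   = \sum_(1 <= i < m.+1) w (i + m)%N * h (x (i + m)%N).
  rewrite -(sum_shift 1 m.+1 m (fun i => w i * h (x i))).
  by have -> : ((2 * m).+1 = m.+1 + m)%N by lia.
have E3 : \sum_((2 * m).+1 <= i < (3 * m).+1) w i * h (x i)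
   = \sum_(1 <= i < m.+1) w (i + 2 * m)%N * h (x (i + 2 * m)%N).
  rewrite -(sum_shift 1 m.+1 (2 * m) (fun i => w i * h (x i))).
  by have -> : ((3 * m).+1 = m.+1 + 2 * m)%N by lia.
rewrite E2 E3 -!big_split /=.
apply: eq_big_nat => i /andP [hi1 hi2].
have e1 : (i + m = m + i)%N by lia.
have e2 : (i + 2 * m = m + (m + i))%N by lia.
rewrite e1 e2 hx ?hw ?hx ?hw; try lia.
by rewrite !mulrDr addrA.
Qed.

Lemma decomp (R : realType) (m : nat) (x : nat -> hvec R) (w : nat -> R) :
  (forall i, (1 <= i <= 2 * m)%N -> x (m + i)%N = hshift (x i)) ->
  (forall i, (1 <= i <= 2 * m)%N -> w (m + i)%N = w i) ->
  forall i, (1 <= i <= 3 * m)%N -> exists i0 a,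
    [/\ (1 <= i0 <= m)%N, (a < 3)%N, i = (i0 + a * m)%N,
        x i = iter a (@hshift R) (x i0) & w i = w i0].
Proof.
move=> hx hw i hi.
case: (leqP i m) => h1.
  by exists i, 0%N; split => //; [lia | rewrite mul0n addn0].
case: (leqP i (2 * m)) => h2.
  exists (i - m)%N, 1%N; split.
  - lia.
  - by [].
  - lia.
  - rewrite /= -hx; [congr (x _); lia | lia].
  - rewrite -(hw (i - m)%N); [congr (w _); lia | lia].
exists (i - 2 * m)%N, 2%N; split.
- lia.
- by [].
- lia.
- rewrite /= -hx; last lia.
  rewrite -hx; last lia.
  congr (x _); lia.
- rewrite -(hw (i - 2 * m)%N); last lia.
  rewrite -(hw (m + (i - 2 * m))%N); last lia.
  congr (w _); lia.
Qed.



Lemma pairC (R : realType) (m : nat) (x : nat -> hvec R) (c : R) :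
  (forall i, (1 <= i <= 2 * m)%N -> x (m + i)%N = hshift (x i)) ->
  (forall i j, (1 <= i <= m)%N ->
     [\/ j = (i + m)%N, (i < j <= m)%N, (i + m < j <= 2 * m)%N
       | (i + 2 * m < j <= 3 * m)%N] ->
     qnorm2 (hinner (x i) (x j)) = c) ->
  forall i0 j0 d, (1 <= i0 <= m)%N -> (1 <= j0 <= m)%N -> (d < 3)%N ->
  (i0 != j0) || (d != 0%N) -> QQ (x i0) (iter d (@hshift R) (x j0)) = c.
Proof.
move=> hx Hc i0 j0 d hi hj hd hne.
have X1 : forall k, (1 <= k <= m)%N -> hshift (x k) = x (m + k)%N.
  by move=> k hk; rewrite hx //; lia.
have X2 : forall k, (1 <= k <= m)%N -> hshift (hshift (x k)) = x (m + (m + k))%N.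
  by move=> k hk; rewrite X1 // -hx //; lia.
case: d hd hne => [|[|[|]]] // _ /= hne.
- case: (ltngtP i0 j0) => h.
  + by apply: Hc => //; apply: Or42; lia.
  + by rewrite QQ_sym; apply: Hc => //; apply: Or42; lia.
  + by move: hne; rewrite h eqxx.
- case: (ltngtP i0 j0) => h.
  + by rewrite X1 //; apply: Hc => //; apply: Or43; lia.
  + rewrite QQ_sym QQ_s12 X2 //; apply: Hc => //; apply: Or44; lia.
  + by rewrite -h X1 //; apply: Hc => //; apply: Or41; lia.
- case: (ltngtP i0 j0) => h.
  + by rewrite X2 //; apply: Hc => //; apply: Or44; lia.
  + rewrite -QQ_s12 QQ_sym X1 //; apply: Hc => //; apply: Or43; lia.
  + rewrite -h -QQ_s12 QQ_sym X1 //; apply: Hc => //; apply: Or41; lia.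
Qed.

Lemma allpairsQ (R : realType) (m : nat) (x : nat -> hvec R) (w : nat -> R) (c : R) :
  (forall i, (1 <= i <= 2 * m)%N -> x (m + i)%N = hshift (x i)) ->
  (forall i, (1 <= i <= 2 * m)%N -> w (m + i)%N = w i) ->
  (forall i j, (1 <= i <= m)%N ->
     [\/ j = (i + m)%N, (i < j <= m)%N, (i + m < j <= 2 * m)%N
       | (i + 2 * m < j <= 3 * m)%N] ->
     qnorm2 (hinner (x i) (x j)) = c) ->
  forall i j, (1 <= i <= 3 * m)%N -> (1 <= j <= 3 * m)%N -> i <> j ->
  QQ (x i) (x j) = c.
Proof.
move=> hx hw Hc i j hi hj hij.
have [i0 [a [hi0 ha ei xi _]]] := decomp hx hw hi.
have [j0 [b [hj0 hb ej xj _]]] := decomp hx hw hj.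
have P := pairC hx Hc.
have ne : a = b -> (i0 != j0) || (0%N != 0%N).
  move=> eab; apply/orP; left; apply/eqP => e; apply: hij.
  by rewrite ei ej e eab.
case: a ha ei xi ne => [|[|[|]]] // _ ei xi ne;
  case: b hb ej xj ne => [|[|[|]]] // _ ej xj ne; rewrite xi xj /=.
- apply: (P i0 j0 0%N) => //; rewrite ?orbT //; exact: ne.
- apply: (P i0 j0 1%N) => //; rewrite ?orbT //; exact: ne.
- apply: (P i0 j0 2%N) => //; rewrite ?orbT //; exact: ne.
- by rewrite QQ_s12; apply: (P i0 j0 2%N) => //; rewrite ?orbT //; exact: ne.
- by rewrite QQ_shift; apply: (P i0 j0 0%N) => //; rewrite ?orbT //; exact: ne.
- by rewrite QQ_shift; apply: (P i0 j0 1%N) => //; rewrite ?orbT //; exact: ne.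
- by rewrite QQ_s12 QQ_shift; apply: (P i0 j0 1%N) => //; rewrite ?orbT //; exact: ne.
- by rewrite QQ_shift QQ_s12; apply: (P i0 j0 2%N) => //; rewrite ?orbT //; exact: ne.
- by rewrite !QQ_shift; apply: (P i0 j0 0%N) => //; rewrite ?orbT //; exact: ne.
Qed.

Lemma T01_sum (R : realType) (m : nat) (x : nat -> hvec R) (w : nat -> R)
  (pi : quat R -> R)
  (Hadd : forall p q, pi (qadd p q) = pi p + pi q)
  (Hsum : forall lo hi F, pi (qsum lo hi F) = \sum_(lo <= i < hi) pi (F i))
  (Hsc : forall a q, pi (qscale a q) = a * pi q) (H0 : pi (qzero R) = 0) :
  (forall i, (1 <= i <= 2 * m)%N -> x (m + i)%N = hshift (x i)) ->
  (forall i, (1 <= i <= 2 * m)%N -> w (m + i)%N = w i) ->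
  qsum 1 (3 * m).+1 (fun i => qscale (w i) (outer_entry (x i) 0 1)) = qzero R ->
  \sum_(1 <= i < m.+1) w i * pi (T01 (x i)) = 0.
Proof.
move=> hx hw E; transitivity (pi (qzero R)); last exact: H0.
rewrite -E Hsum.
rewrite (eq_big_nat _ _ (n := (3 * m).+1) (F2 := fun i => w i * (fun u => pi (outer_entry u 0 1)) (x i)));
  last by move=> i _ /=; exact: Hsc.
rewrite (orbit_sum (fun u => pi (outer_entry u 0 1))) //; apply: eq_big_nat => i _ /=.
by rewrite T01_split.
Qed.

Lemma W1_sum (R : realType) (m : nat) (x : nat -> hvec R) (w : nat -> R) :
  (forall i, (1 <= i <= 2 * m)%N -> x (m + i)%N = hshift (x i)) ->
  (forall i, (1 <= i <= 2 * m)%N -> w (m + i)%N = w i) ->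
  (forall i, (1 <= i <= m)%N -> NN (x i) = 1) ->
  qsum 1 (3 * m).+1 (fun i => qscale (w i) (outer_entry (x i) 0 0)) = qreal 1 ->
  \sum_(1 <= i < m.+1) w i = 1.
Proof.
move=> hx hw hn E.
have := congr1 (@qre R) E; rewrite /= => <-.
rewrite (eq_big_nat _ _ (n := (3 * m).+1) (F2 := fun i => w i * (fun u => qre (outer_entry u 0 0)) (x i)));
  last by [].
rewrite (orbit_sum (fun u => qre (outer_entry u 0 0))) //; apply: eq_big_nat => i hi /=.
by rewrite outer00 hn ?mulr1.
Qed.

Lemma sumQ (R : realType) (m : nat) (x : nat -> hvec R) (w : nat -> R) (y : hvec R) :
  (forall i, (1 <= i <= 2 * m)%N -> x (m + i)%N = hshift (x i)) ->
  (forall i, (1 <= i <= 2 * m)%N -> w (m + i)%N = w i) ->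
  (forall i, (1 <= i <= m)%N -> NN (x i) = 1) ->
  \sum_(1 <= i < (3 * m).+1) w i * QQ (x i) y =
  NN y * \sum_(1 <= i < m.+1) w i + 2 * (
    (\sum_(1 <= i < m.+1) w i * qre (T01 (x i))) * qre (T01 y) +
    (\sum_(1 <= i < m.+1) w i * qi (T01 (x i))) * qi (T01 y) +
    (\sum_(1 <= i < m.+1) w i * qj (T01 (x i))) * qj (T01 y) +
    (\sum_(1 <= i < m.+1) w i * qk (T01 (x i))) * qk (T01 y)).
Proof.
move=> hx hw hn.
rewrite (orbit_sum (fun u => QQ u y)) //.
rewrite !mulr_suml -!big_split /= !mulr_sumr -big_split /=.
apply: eq_big_nat => i hi.
rewrite key_id hn // /qdot /T01 /qadd /=; ring.
Qed.



Lemma sum_delta (R : realType) (lo hi j : nat) (K : R) : (lo <= j < hi)%N ->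
  \sum_(lo <= i < hi) ((i == j)%:R * K) = K.
Proof.
move=> /andP [h1 h2].
rewrite (big_cat_nat _ (n:=j)) //=; last lia.
rewrite [X in _ + X]big_ltn // eqxx mul1r.
rewrite big_nat_cond big1 => [|i /andP [/andP [_ hk] _]]; last first.
  by rewrite (ltn_eqF hk) mul0r.
rewrite big_nat_cond big1 => [|i /andP [/andP [hk _] _]]; last first.
  by rewrite (gtn_eqF hk) mul0r.
by rewrite add0r addr0.
Qed.

Theorem proposition4p6 (R : realType) (m : nat) (x : nat -> hvec R)
  (w : nat -> R) :
  (1 <= m)%N ->
  (forall i, (1 <= i <= 2 * m)%N -> x (m + i)%N = hshift (x i)) ->
  (forall i, (1 <= i <= 2 * m)%N -> w (m + i)%N = w i) ->
  (forall i, (1 <= i <= m)%N -> \sum_(k < 3) qnorm2 (x i k) = 1) ->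
  (exists c : R, forall i j, (1 <= i <= m)%N ->
     [\/ j = (i + m)%N, (i < j <= m)%N, (i + m < j <= 2 * m)%N
       | (i + 2 * m < j <= 3 * m)%N] ->
     qnorm2 (hinner (x i) (x j)) = c) ->
  qsum 1 (3 * m).+1 (fun i => qscale (w i) (outer_entry (x i) 0 0)) = qreal 1 ->
  qsum 1 (3 * m).+1 (fun i => qscale (w i) (outer_entry (x i) 0 1)) = qzero R ->
  (forall i, (1 <= i <= 3 * m)%N -> w i = (m%:R)^-1) /\
  tight_simplex (3 * m) x.
Proof.
move=> hm hx hw hn [c Hc] H6 H7.
have hn' : forall i, (1 <= i <= m)%N -> NN (x i) = 1.
  by move=> i hi; rewrite -NN_sum hn.
have hN : forall i, (1 <= i <= 3 * m)%N -> NN (x i) = 1.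
  move=> i hi; have [i0 [a [hi0 ha _ xi _]]] := decomp hx hw hi.
  rewrite xi; case: a ha xi => [|[|[|]]] // _ _ /=; rewrite ?NN_shift; exact: hn'.
have W1 := W1_sum hx hw hn' H6.
have Sre := T01_sum (pi := @qre R) (fun _ _ => erefl) (fun _ _ _ => erefl)
   (fun _ _ => erefl) erefl hx hw H7.
have Sqi := T01_sum (pi := @qi R) (fun _ _ => erefl) (fun _ _ _ => erefl)
   (fun _ _ => erefl) erefl hx hw H7.
have Sqj := T01_sum (pi := @qj R) (fun _ _ => erefl) (fun _ _ _ => erefl)
   (fun _ _ => erefl) erefl hx hw H7.
have Sqk := T01_sum (pi := @qk R) (fun _ _ => erefl) (fun _ _ _ => erefl)
   (fun _ _ => erefl) erefl hx hw H7.
have W3 : \sum_(1 <= i < (3 * m).+1) w i = 3.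
  transitivity (\sum_(1 <= i < (3 * m).+1) w i * (fun _ : hvec R => (1 : R)) (x i)).
    by apply: eq_big_nat => i _; rewrite mulr1.
  rewrite (orbit_sum (fun _ => 1) hx hw) -mulr_suml W1; lra.
have Hall := allpairsQ hx hw Hc.
have Hj : forall j, (1 <= j <= 3 * m)%N -> c * 3 + w j * (1 - c) = 1.
  move=> j hj.
  have := sumQ (x j) hx hw hn'.
  rewrite W1 Sre Sqi Sqj Sqk hN // !mul0r !addr0 mulr0 mulr1 addr0.
  rewrite (eq_big_nat _ _ (F2 := fun i => w i * c + (i == j)%:R * (w j * (1 - c)))).
    by rewrite big_split /= -mulr_suml sum_delta // W3 mulrC.
  move=> i hi /=; case: eqP => [->|/eqP ne].
    have -> : (true%:R : R) = 1 by []. by rewrite QQ_self hN // expr1n mul1r mulr1 mulrBr mulr1 addrC subrK.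
  have -> : (false%:R : R) = 0 by [].
  rewrite Hall; [ring | lia | lia | exact/eqP].
have h3m : (1 <= 3 * m)%N by lia.
have c1 : 1 - c != 0.
  apply/eqP => e; have := Hj 1%N h3m; rewrite e; lra.
have wK : forall j, (1 <= j <= 3 * m)%N -> w j = (1 - 3 * c) / (1 - c).
  move=> j hj; apply: (canRL (mulfK c1)); have := Hj j hj; lra.
have mpos : (0 < m%:R :> R) by rewrite ltr0n.
have m0 : (m%:R : R) != 0 by rewrite gt_eqF.
have m1 : (1 : R) <= m%:R by rewrite ler1n.
have Kval : (1 - 3 * c) / (1 - c) = m%:R^-1.
  have : \sum_(1 <= i < m.+1) w i = (1 - 3 * c) / (1 - c) *+ m.
    transitivity (\sum_(1 <= i < m.+1) ((1 - 3 * c) / (1 - c))).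
      by apply: eq_big_nat => i hi; rewrite wK //; lia.
    by rewrite sumr_const_nat subn1.
  rewrite W1 -mulr_natr => e.
  apply: (mulIf m0) => /=; rewrite -e; field; exact: m0.
have Wm : forall i, (1 <= i <= 3 * m)%N -> w i = m%:R^-1.
  by move=> i hi; rewrite wK // Kval.
have cval : c = ((3 * m)%:R - 3) / (3 * ((3 * m)%:R - 1)).
  have := Hj 1%N h3m; rewrite Wm // => e.
  have e2 : c * (3 * m%:R - 1) = m%:R - 1.
    have h : 1 - 3 * c = m%:R^-1 * (1 - c) by lra.
    have e3 : m%:R * (1 - 3 * c) = 1 - c by rewrite h mulrA mulfV // mul1r.
    move: e3; rewrite mulrBr mulr1 => e3.
    rewrite mulrBr mulr1; lra.
  have nz : 3 * m%:R - 1 != 0 :> R.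
    by apply/eqP => e4; clear -e4 m1; lra.
  rewrite natrM -[c](mulfK nz) e2; field.
  exact: nz.
split => //.
split; [|split].
- by move=> i hi; rewrite NN_sum hN.
- move=> i j hi hj hij [lam [_ hk]].
  have [E1 E2] := line_id hk.
  move: E1 E2; rewrite (Hall i j) // !hN // expr1n mul1r => E1 E2.
  by move: c1; rewrite E1 -E2 subrr eqxx.
- by move=> i j hi hj hij; rewrite -cval; exact: Hall.
Qed.
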